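(* Let $\omega=\frac{-1+\sqrt{-3}}{2}$ and let $\frac rs$ be a rational number in lowest terms with $s>0$. If $\mathcal{S}_{\frac rs}(-\omega)=0$, or equivalently $q^2-q+1$ divides $\mathcal{S}_{\frac rs}(q)$, then $s$ is a multiple of $6$.
   Context: Let $q$ be a formal parameter, $R_q=\begin{pmatrix} q & 1\\ 0 & 1\end{pmatrix}$, $S_q=\begin{pmatrix} 0 & -q^{-1}\\ 1 & 0\end{pmatrix}$, and for integers $c_1,\dots,c_k$ put $M_q(c_1,\dots,c_k)=R_q^{c_1}S_q\cdots R_q^{c_k}S_q$. Every irreducible fraction $\frac{r}{s}>1$ has a unique negative continued fraction expansion $\frac{r}{s}=c_1-\cfrac{1}{c_2-\cfrac{1}{\ddots-\cfrac{1}{c_k}}}$ with all $c_i\ge 2$; define $\mathcal{S}_{\frac rs}(q)$ as the $(2,1)$-entry of $M_q(c_1,\dots,c_k)$. For an arbitrary rational $x$, define $\mathcal{S}_x(q):=\mathcal{S}_{x+m}(q)$ for any integer $m$ with $x+m>1$ (independent of $m$). Thus $\mathcal{S}_x(q)\in\mathbb{Z}[q]$ is the denominator of the $q$-deformed rational $[x]_q$, with $\mathcal{S}_x(0)=1$, and $\mathcal{S}_{\frac rs}(1)=s$. *)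

(* Defs.v *)
From mathcomp Require Import all_boot all_order all_algebra all_field.
Set Implicit Arguments. Unset Strict Implicit. Unset Printing Implicit Defensive.
Import Order.TTheory GRing.Theory Num.Theory.
Local Open Scope ring_scope.

Fixpoint ncf (cs : seq nat) : rat :=
  match cs with
  | [::] => 0
  | [:: c] => c%:R
  | c :: cs' => c%:R - (ncf cs')^-1
  end.

Definition Rq {F : fieldType} (q : F) : 'M[F]_2 :=
  \matrix_(i < 2, j < 2)
    if (i == 0 :> nat) && (j == 0 :> nat) then q
    else if (i == 0 :> nat) then 1 else if (j == 0 :> nat) then 0 else 1.

Definition Sq {F : fieldType} (q : F) : 'M[F]_2 :=
  \matrix_(i < 2, j < 2)
    if (i == 0 :> nat) && (j == 0 :> nat) then 0
    else if (i == 0 :> nat) then - q^-1 else if (j == 0 :> nat) then 1 else 0.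

Definition Mq {F : fieldType} (q : F) (cs : seq nat) : 'M[F]_2 :=
  foldr (fun c A => (Rq q ^+ c *m Sq q) *m A) 1%:M cs.

(* (2,1)-entry of M_q(cs), i.e. the value S_x(q) when cs is the negative
   continued fraction expansion of x + m > 1. *)
Definition Sval {F : fieldType} (q : F) (cs : seq nat) : F :=
  Mq q cs (inord 1) (inord 0).

Definition omega : algC := (-1 + sqrtC (-3)) / 2%:R.

(* Main.v *)
Require Import Defs.
From mathcomp Require Import all_boot all_order all_algebra all_field.
From mathcomp Require Import ring zify.
Set Implicit Arguments. Unset Strict Implicit. Unset Printing Implicit Defensive.
Import GRing.Theory Num.Theory.
Local Open Scope ring_scope.

Section Gen.
Variable R : comPzRingType.
Definition pa (x y : R * R) : R * R := (x.1 + y.1, x.2 + y.2).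
Definition pm (x y : R * R) : R * R :=
  (x.1 * y.1 - x.2 * y.2, x.1 * y.2 + x.2 * y.1 + x.2 * y.2).
Definition Fst (z : (R * R) * (R * R) * R) : (R * R) * (R * R) * R :=
  (pm (0, 1) z.1.1, pa (1, 0) (pm (0, 1) z.1.2), z.2 + 1).
Definition Pc (c : nat) := iter c Fst ((1, 0), (0, 0), 0).
Definition step (c : nat) (X : (R * R) * (R * R) * (R * R)) :=
  ((pa (pm (Pc c).1.2 X.1.1) (pm (pm (Pc c).1.1 (-1, 1)) X.1.2), X.1.1),
   ((Pc c).2 * X.2.1 - X.2.2, X.2.1)).
Definition init : (R * R) * (R * R) * (R * R) := (((1, 0), (0, 0)), (1, 0)).
Definition col (cs : seq nat) := foldr step init cs.
End Gen.

Definition StZ := ((int * int) * (int * int) * (int * int))%type.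
Definition rd (a : int) : int := (a %% 6)%Z.
Definition rdp (x : int * int) := (rd x.1, rd x.2).
Definition rdS (X : StZ) : StZ := (rdp X.1.1, rdp X.1.2, rdp X.2).
Definition intEq (a b : int) : bool :=
  match a, b with Posz m, Posz n => eqn m n | Negz m, Negz n => eqn m n | _, _ => false end.
Definition eqP2 (x y : int * int) := intEq x.1 y.1 && intEq x.2 y.2.
Definition eqS (X Y : StZ) := [&& eqP2 X.1.1 Y.1.1, eqP2 X.1.2 Y.1.2 & eqP2 X.2 Y.2].
Definition memb (X : StZ) (H : seq StZ) := has (eqS X) H.
Definition H6 : seq StZ := [::
((0%:Z, 0%:Z), (0%:Z, 1%:Z), (0%:Z, 1%:Z));
((0%:Z, 0%:Z), (0%:Z, 1%:Z), (0%:Z, 5%:Z));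
((0%:Z, 0%:Z), (0%:Z, 5%:Z), (0%:Z, 1%:Z));
((0%:Z, 0%:Z), (0%:Z, 5%:Z), (0%:Z, 5%:Z));
((0%:Z, 0%:Z), (1%:Z, 0%:Z), (0%:Z, 1%:Z));
((0%:Z, 0%:Z), (1%:Z, 0%:Z), (0%:Z, 5%:Z));
((0%:Z, 0%:Z), (1%:Z, 5%:Z), (0%:Z, 1%:Z));
((0%:Z, 0%:Z), (1%:Z, 5%:Z), (0%:Z, 5%:Z));
((0%:Z, 0%:Z), (5%:Z, 0%:Z), (0%:Z, 1%:Z));
((0%:Z, 0%:Z), (5%:Z, 0%:Z), (0%:Z, 5%:Z));
((0%:Z, 0%:Z), (5%:Z, 1%:Z), (0%:Z, 1%:Z));
((0%:Z, 0%:Z), (5%:Z, 1%:Z), (0%:Z, 5%:Z));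
((0%:Z, 1%:Z), (0%:Z, 0%:Z), (1%:Z, 0%:Z));
((0%:Z, 1%:Z), (0%:Z, 0%:Z), (5%:Z, 0%:Z));
((0%:Z, 1%:Z), (0%:Z, 1%:Z), (1%:Z, 1%:Z));
((0%:Z, 1%:Z), (0%:Z, 1%:Z), (5%:Z, 5%:Z));
((0%:Z, 1%:Z), (1%:Z, 1%:Z), (1%:Z, 2%:Z));
((0%:Z, 1%:Z), (1%:Z, 1%:Z), (5%:Z, 4%:Z));
((0%:Z, 1%:Z), (1%:Z, 5%:Z), (1%:Z, 5%:Z));
((0%:Z, 1%:Z), (1%:Z, 5%:Z), (5%:Z, 1%:Z));
((0%:Z, 1%:Z), (2%:Z, 0%:Z), (1%:Z, 3%:Z));
((0%:Z, 1%:Z), (2%:Z, 0%:Z), (5%:Z, 3%:Z));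
((0%:Z, 1%:Z), (2%:Z, 5%:Z), (1%:Z, 4%:Z));
((0%:Z, 1%:Z), (2%:Z, 5%:Z), (5%:Z, 2%:Z));
((0%:Z, 2%:Z), (1%:Z, 0%:Z), (3%:Z, 1%:Z));
((0%:Z, 2%:Z), (1%:Z, 0%:Z), (3%:Z, 5%:Z));
((0%:Z, 2%:Z), (1%:Z, 1%:Z), (3%:Z, 2%:Z));
((0%:Z, 2%:Z), (1%:Z, 1%:Z), (3%:Z, 4%:Z));
((0%:Z, 2%:Z), (2%:Z, 1%:Z), (3%:Z, 1%:Z));
((0%:Z, 2%:Z), (2%:Z, 1%:Z), (3%:Z, 5%:Z));
((0%:Z, 2%:Z), (2%:Z, 5%:Z), (3%:Z, 2%:Z));
((0%:Z, 2%:Z), (2%:Z, 5%:Z), (3%:Z, 4%:Z));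
((0%:Z, 2%:Z), (3%:Z, 0%:Z), (3%:Z, 2%:Z));
((0%:Z, 2%:Z), (3%:Z, 0%:Z), (3%:Z, 4%:Z));
((0%:Z, 2%:Z), (3%:Z, 5%:Z), (3%:Z, 1%:Z));
((0%:Z, 2%:Z), (3%:Z, 5%:Z), (3%:Z, 5%:Z));
((0%:Z, 3%:Z), (2%:Z, 0%:Z), (2%:Z, 3%:Z));
((0%:Z, 3%:Z), (2%:Z, 0%:Z), (4%:Z, 3%:Z));
((0%:Z, 3%:Z), (2%:Z, 1%:Z), (2%:Z, 5%:Z));
((0%:Z, 3%:Z), (2%:Z, 1%:Z), (4%:Z, 1%:Z));
((0%:Z, 3%:Z), (3%:Z, 1%:Z), (2%:Z, 1%:Z));
((0%:Z, 3%:Z), (3%:Z, 1%:Z), (4%:Z, 5%:Z));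
((0%:Z, 3%:Z), (3%:Z, 5%:Z), (2%:Z, 1%:Z));
((0%:Z, 3%:Z), (3%:Z, 5%:Z), (4%:Z, 5%:Z));
((0%:Z, 3%:Z), (4%:Z, 0%:Z), (2%:Z, 3%:Z));
((0%:Z, 3%:Z), (4%:Z, 0%:Z), (4%:Z, 3%:Z));
((0%:Z, 3%:Z), (4%:Z, 5%:Z), (2%:Z, 5%:Z));
((0%:Z, 3%:Z), (4%:Z, 5%:Z), (4%:Z, 1%:Z));
((0%:Z, 4%:Z), (3%:Z, 0%:Z), (3%:Z, 2%:Z));
((0%:Z, 4%:Z), (3%:Z, 0%:Z), (3%:Z, 4%:Z));
((0%:Z, 4%:Z), (3%:Z, 1%:Z), (3%:Z, 1%:Z));
((0%:Z, 4%:Z), (3%:Z, 1%:Z), (3%:Z, 5%:Z));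
((0%:Z, 4%:Z), (4%:Z, 1%:Z), (3%:Z, 2%:Z));
((0%:Z, 4%:Z), (4%:Z, 1%:Z), (3%:Z, 4%:Z));
((0%:Z, 4%:Z), (4%:Z, 5%:Z), (3%:Z, 1%:Z));
((0%:Z, 4%:Z), (4%:Z, 5%:Z), (3%:Z, 5%:Z));
((0%:Z, 4%:Z), (5%:Z, 0%:Z), (3%:Z, 1%:Z));
((0%:Z, 4%:Z), (5%:Z, 0%:Z), (3%:Z, 5%:Z));
((0%:Z, 4%:Z), (5%:Z, 5%:Z), (3%:Z, 2%:Z));
((0%:Z, 4%:Z), (5%:Z, 5%:Z), (3%:Z, 4%:Z));
((0%:Z, 5%:Z), (0%:Z, 0%:Z), (1%:Z, 0%:Z));
((0%:Z, 5%:Z), (0%:Z, 0%:Z), (5%:Z, 0%:Z));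
((0%:Z, 5%:Z), (0%:Z, 5%:Z), (1%:Z, 1%:Z));
((0%:Z, 5%:Z), (0%:Z, 5%:Z), (5%:Z, 5%:Z));
((0%:Z, 5%:Z), (4%:Z, 0%:Z), (1%:Z, 3%:Z));
((0%:Z, 5%:Z), (4%:Z, 0%:Z), (5%:Z, 3%:Z));
((0%:Z, 5%:Z), (4%:Z, 1%:Z), (1%:Z, 4%:Z));
((0%:Z, 5%:Z), (4%:Z, 1%:Z), (5%:Z, 2%:Z));
((0%:Z, 5%:Z), (5%:Z, 1%:Z), (1%:Z, 5%:Z));
((0%:Z, 5%:Z), (5%:Z, 1%:Z), (5%:Z, 1%:Z));
((0%:Z, 5%:Z), (5%:Z, 5%:Z), (1%:Z, 2%:Z));
((0%:Z, 5%:Z), (5%:Z, 5%:Z), (5%:Z, 4%:Z));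
((1%:Z, 0%:Z), (0%:Z, 0%:Z), (1%:Z, 0%:Z));
((1%:Z, 0%:Z), (0%:Z, 0%:Z), (5%:Z, 0%:Z));
((1%:Z, 0%:Z), (0%:Z, 5%:Z), (1%:Z, 5%:Z));
((1%:Z, 0%:Z), (0%:Z, 5%:Z), (5%:Z, 1%:Z));
((1%:Z, 0%:Z), (1%:Z, 0%:Z), (1%:Z, 1%:Z));
((1%:Z, 0%:Z), (1%:Z, 0%:Z), (5%:Z, 5%:Z));
((1%:Z, 0%:Z), (1%:Z, 4%:Z), (1%:Z, 4%:Z));
((1%:Z, 0%:Z), (1%:Z, 4%:Z), (5%:Z, 2%:Z));
((1%:Z, 0%:Z), (2%:Z, 4%:Z), (1%:Z, 3%:Z));
((1%:Z, 0%:Z), (2%:Z, 4%:Z), (5%:Z, 3%:Z));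
((1%:Z, 0%:Z), (2%:Z, 5%:Z), (1%:Z, 2%:Z));
((1%:Z, 0%:Z), (2%:Z, 5%:Z), (5%:Z, 4%:Z));
((1%:Z, 1%:Z), (1%:Z, 0%:Z), (2%:Z, 1%:Z));
((1%:Z, 1%:Z), (1%:Z, 0%:Z), (4%:Z, 5%:Z));
((1%:Z, 1%:Z), (1%:Z, 5%:Z), (2%:Z, 5%:Z));
((1%:Z, 1%:Z), (1%:Z, 5%:Z), (4%:Z, 1%:Z));
((1%:Z, 1%:Z), (2%:Z, 0%:Z), (2%:Z, 3%:Z));
((1%:Z, 1%:Z), (2%:Z, 0%:Z), (4%:Z, 3%:Z));
((1%:Z, 1%:Z), (2%:Z, 4%:Z), (2%:Z, 3%:Z));
((1%:Z, 1%:Z), (2%:Z, 4%:Z), (4%:Z, 3%:Z));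
((1%:Z, 1%:Z), (3%:Z, 4%:Z), (2%:Z, 1%:Z));
((1%:Z, 1%:Z), (3%:Z, 4%:Z), (4%:Z, 5%:Z));
((1%:Z, 1%:Z), (3%:Z, 5%:Z), (2%:Z, 5%:Z));
((1%:Z, 1%:Z), (3%:Z, 5%:Z), (4%:Z, 1%:Z));
((1%:Z, 2%:Z), (2%:Z, 0%:Z), (1%:Z, 3%:Z));
((1%:Z, 2%:Z), (2%:Z, 0%:Z), (5%:Z, 3%:Z));
((1%:Z, 2%:Z), (2%:Z, 5%:Z), (1%:Z, 2%:Z));
((1%:Z, 2%:Z), (2%:Z, 5%:Z), (5%:Z, 4%:Z));
((1%:Z, 2%:Z), (3%:Z, 0%:Z), (1%:Z, 4%:Z));
((1%:Z, 2%:Z), (3%:Z, 0%:Z), (5%:Z, 2%:Z));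
((1%:Z, 2%:Z), (3%:Z, 4%:Z), (1%:Z, 1%:Z));
((1%:Z, 2%:Z), (3%:Z, 4%:Z), (5%:Z, 5%:Z));
((1%:Z, 2%:Z), (4%:Z, 4%:Z), (1%:Z, 0%:Z));
((1%:Z, 2%:Z), (4%:Z, 4%:Z), (5%:Z, 0%:Z));
((1%:Z, 2%:Z), (4%:Z, 5%:Z), (1%:Z, 5%:Z));
((1%:Z, 2%:Z), (4%:Z, 5%:Z), (5%:Z, 1%:Z));
((1%:Z, 3%:Z), (3%:Z, 0%:Z), (1%:Z, 2%:Z));
((1%:Z, 3%:Z), (3%:Z, 0%:Z), (5%:Z, 4%:Z));
((1%:Z, 3%:Z), (3%:Z, 5%:Z), (1%:Z, 1%:Z));
((1%:Z, 3%:Z), (3%:Z, 5%:Z), (5%:Z, 5%:Z));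
((1%:Z, 3%:Z), (4%:Z, 0%:Z), (1%:Z, 3%:Z));
((1%:Z, 3%:Z), (4%:Z, 0%:Z), (5%:Z, 3%:Z));
((1%:Z, 3%:Z), (4%:Z, 4%:Z), (1%:Z, 0%:Z));
((1%:Z, 3%:Z), (4%:Z, 4%:Z), (5%:Z, 0%:Z));
((1%:Z, 3%:Z), (5%:Z, 4%:Z), (1%:Z, 5%:Z));
((1%:Z, 3%:Z), (5%:Z, 4%:Z), (5%:Z, 1%:Z));
((1%:Z, 3%:Z), (5%:Z, 5%:Z), (1%:Z, 4%:Z));
((1%:Z, 3%:Z), (5%:Z, 5%:Z), (5%:Z, 2%:Z));
((1%:Z, 4%:Z), (0%:Z, 4%:Z), (2%:Z, 3%:Z));
((1%:Z, 4%:Z), (0%:Z, 4%:Z), (4%:Z, 3%:Z));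
((1%:Z, 4%:Z), (0%:Z, 5%:Z), (2%:Z, 1%:Z));
((1%:Z, 4%:Z), (0%:Z, 5%:Z), (4%:Z, 5%:Z));
((1%:Z, 4%:Z), (4%:Z, 0%:Z), (2%:Z, 3%:Z));
((1%:Z, 4%:Z), (4%:Z, 0%:Z), (4%:Z, 3%:Z));
((1%:Z, 4%:Z), (4%:Z, 5%:Z), (2%:Z, 1%:Z));
((1%:Z, 4%:Z), (4%:Z, 5%:Z), (4%:Z, 5%:Z));
((1%:Z, 4%:Z), (5%:Z, 0%:Z), (2%:Z, 5%:Z));
((1%:Z, 4%:Z), (5%:Z, 0%:Z), (4%:Z, 1%:Z));
((1%:Z, 4%:Z), (5%:Z, 4%:Z), (2%:Z, 5%:Z));
((1%:Z, 4%:Z), (5%:Z, 4%:Z), (4%:Z, 1%:Z));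
((1%:Z, 5%:Z), (0%:Z, 0%:Z), (1%:Z, 0%:Z));
((1%:Z, 5%:Z), (0%:Z, 0%:Z), (5%:Z, 0%:Z));
((1%:Z, 5%:Z), (0%:Z, 4%:Z), (1%:Z, 3%:Z));
((1%:Z, 5%:Z), (0%:Z, 4%:Z), (5%:Z, 3%:Z));
((1%:Z, 5%:Z), (1%:Z, 4%:Z), (1%:Z, 2%:Z));
((1%:Z, 5%:Z), (1%:Z, 4%:Z), (5%:Z, 4%:Z));
((1%:Z, 5%:Z), (1%:Z, 5%:Z), (1%:Z, 1%:Z));
((1%:Z, 5%:Z), (1%:Z, 5%:Z), (5%:Z, 5%:Z));
((1%:Z, 5%:Z), (5%:Z, 0%:Z), (1%:Z, 5%:Z));
((1%:Z, 5%:Z), (5%:Z, 0%:Z), (5%:Z, 1%:Z));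
((1%:Z, 5%:Z), (5%:Z, 5%:Z), (1%:Z, 4%:Z));
((1%:Z, 5%:Z), (5%:Z, 5%:Z), (5%:Z, 2%:Z));
((2%:Z, 0%:Z), (1%:Z, 4%:Z), (3%:Z, 2%:Z));
((2%:Z, 0%:Z), (1%:Z, 4%:Z), (3%:Z, 4%:Z));
((2%:Z, 0%:Z), (1%:Z, 5%:Z), (3%:Z, 1%:Z));
((2%:Z, 0%:Z), (1%:Z, 5%:Z), (3%:Z, 5%:Z));
((2%:Z, 0%:Z), (2%:Z, 3%:Z), (3%:Z, 1%:Z));
((2%:Z, 0%:Z), (2%:Z, 3%:Z), (3%:Z, 5%:Z));
((2%:Z, 0%:Z), (2%:Z, 5%:Z), (3%:Z, 2%:Z));
((2%:Z, 0%:Z), (2%:Z, 5%:Z), (3%:Z, 4%:Z));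
((2%:Z, 0%:Z), (3%:Z, 3%:Z), (3%:Z, 2%:Z));
((2%:Z, 0%:Z), (3%:Z, 3%:Z), (3%:Z, 4%:Z));
((2%:Z, 0%:Z), (3%:Z, 4%:Z), (3%:Z, 1%:Z));
((2%:Z, 0%:Z), (3%:Z, 4%:Z), (3%:Z, 5%:Z));
((2%:Z, 1%:Z), (2%:Z, 4%:Z), (1%:Z, 3%:Z));
((2%:Z, 1%:Z), (2%:Z, 4%:Z), (5%:Z, 3%:Z));
((2%:Z, 1%:Z), (2%:Z, 5%:Z), (1%:Z, 4%:Z));
((2%:Z, 1%:Z), (2%:Z, 5%:Z), (5%:Z, 2%:Z));
((2%:Z, 1%:Z), (3%:Z, 3%:Z), (1%:Z, 2%:Z));
((2%:Z, 1%:Z), (3%:Z, 3%:Z), (5%:Z, 4%:Z));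
((2%:Z, 1%:Z), (3%:Z, 5%:Z), (1%:Z, 5%:Z));
((2%:Z, 1%:Z), (3%:Z, 5%:Z), (5%:Z, 1%:Z));
((2%:Z, 1%:Z), (4%:Z, 3%:Z), (1%:Z, 1%:Z));
((2%:Z, 1%:Z), (4%:Z, 3%:Z), (5%:Z, 5%:Z));
((2%:Z, 1%:Z), (4%:Z, 4%:Z), (1%:Z, 0%:Z));
((2%:Z, 1%:Z), (4%:Z, 4%:Z), (5%:Z, 0%:Z));
((2%:Z, 2%:Z), (3%:Z, 4%:Z), (0%:Z, 1%:Z));
((2%:Z, 2%:Z), (3%:Z, 4%:Z), (0%:Z, 5%:Z));
((2%:Z, 2%:Z), (3%:Z, 5%:Z), (0%:Z, 1%:Z));
((2%:Z, 2%:Z), (3%:Z, 5%:Z), (0%:Z, 5%:Z));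
((2%:Z, 2%:Z), (4%:Z, 3%:Z), (0%:Z, 1%:Z));
((2%:Z, 2%:Z), (4%:Z, 3%:Z), (0%:Z, 5%:Z));
((2%:Z, 2%:Z), (4%:Z, 5%:Z), (0%:Z, 1%:Z));
((2%:Z, 2%:Z), (4%:Z, 5%:Z), (0%:Z, 5%:Z));
((2%:Z, 2%:Z), (5%:Z, 3%:Z), (0%:Z, 1%:Z));
((2%:Z, 2%:Z), (5%:Z, 3%:Z), (0%:Z, 5%:Z));
((2%:Z, 2%:Z), (5%:Z, 4%:Z), (0%:Z, 1%:Z));
((2%:Z, 2%:Z), (5%:Z, 4%:Z), (0%:Z, 5%:Z));
((2%:Z, 3%:Z), (0%:Z, 3%:Z), (1%:Z, 4%:Z));
((2%:Z, 3%:Z), (0%:Z, 3%:Z), (5%:Z, 2%:Z));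
((2%:Z, 3%:Z), (0%:Z, 4%:Z), (1%:Z, 3%:Z));
((2%:Z, 3%:Z), (0%:Z, 4%:Z), (5%:Z, 3%:Z));
((2%:Z, 3%:Z), (4%:Z, 4%:Z), (1%:Z, 0%:Z));
((2%:Z, 3%:Z), (4%:Z, 4%:Z), (5%:Z, 0%:Z));
((2%:Z, 3%:Z), (4%:Z, 5%:Z), (1%:Z, 1%:Z));
((2%:Z, 3%:Z), (4%:Z, 5%:Z), (5%:Z, 5%:Z));
((2%:Z, 3%:Z), (5%:Z, 3%:Z), (1%:Z, 5%:Z));
((2%:Z, 3%:Z), (5%:Z, 3%:Z), (5%:Z, 1%:Z));
((2%:Z, 3%:Z), (5%:Z, 5%:Z), (1%:Z, 2%:Z));
((2%:Z, 3%:Z), (5%:Z, 5%:Z), (5%:Z, 4%:Z));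
((2%:Z, 4%:Z), (0%:Z, 3%:Z), (3%:Z, 2%:Z));
((2%:Z, 4%:Z), (0%:Z, 3%:Z), (3%:Z, 4%:Z));
((2%:Z, 4%:Z), (0%:Z, 5%:Z), (3%:Z, 1%:Z));
((2%:Z, 4%:Z), (0%:Z, 5%:Z), (3%:Z, 5%:Z));
((2%:Z, 4%:Z), (1%:Z, 3%:Z), (3%:Z, 1%:Z));
((2%:Z, 4%:Z), (1%:Z, 3%:Z), (3%:Z, 5%:Z));
((2%:Z, 4%:Z), (1%:Z, 4%:Z), (3%:Z, 2%:Z));
((2%:Z, 4%:Z), (1%:Z, 4%:Z), (3%:Z, 4%:Z));
((2%:Z, 4%:Z), (5%:Z, 4%:Z), (3%:Z, 1%:Z));
((2%:Z, 4%:Z), (5%:Z, 4%:Z), (3%:Z, 5%:Z));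
((2%:Z, 4%:Z), (5%:Z, 5%:Z), (3%:Z, 2%:Z));
((2%:Z, 4%:Z), (5%:Z, 5%:Z), (3%:Z, 4%:Z));
((2%:Z, 5%:Z), (0%:Z, 4%:Z), (2%:Z, 3%:Z));
((2%:Z, 5%:Z), (0%:Z, 4%:Z), (4%:Z, 3%:Z));
((2%:Z, 5%:Z), (0%:Z, 5%:Z), (2%:Z, 5%:Z));
((2%:Z, 5%:Z), (0%:Z, 5%:Z), (4%:Z, 1%:Z));
((2%:Z, 5%:Z), (1%:Z, 3%:Z), (2%:Z, 1%:Z));
((2%:Z, 5%:Z), (1%:Z, 3%:Z), (4%:Z, 5%:Z));
((2%:Z, 5%:Z), (1%:Z, 5%:Z), (2%:Z, 1%:Z));
((2%:Z, 5%:Z), (1%:Z, 5%:Z), (4%:Z, 5%:Z));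
((2%:Z, 5%:Z), (2%:Z, 3%:Z), (2%:Z, 5%:Z));
((2%:Z, 5%:Z), (2%:Z, 3%:Z), (4%:Z, 1%:Z));
((2%:Z, 5%:Z), (2%:Z, 4%:Z), (2%:Z, 3%:Z));
((2%:Z, 5%:Z), (2%:Z, 4%:Z), (4%:Z, 3%:Z));
((3%:Z, 0%:Z), (2%:Z, 3%:Z), (2%:Z, 1%:Z));
((3%:Z, 0%:Z), (2%:Z, 3%:Z), (4%:Z, 5%:Z));
((3%:Z, 0%:Z), (2%:Z, 4%:Z), (2%:Z, 3%:Z));
((3%:Z, 0%:Z), (2%:Z, 4%:Z), (4%:Z, 3%:Z));
((3%:Z, 0%:Z), (3%:Z, 2%:Z), (2%:Z, 5%:Z));
((3%:Z, 0%:Z), (3%:Z, 2%:Z), (4%:Z, 1%:Z));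
((3%:Z, 0%:Z), (3%:Z, 4%:Z), (2%:Z, 5%:Z));
((3%:Z, 0%:Z), (3%:Z, 4%:Z), (4%:Z, 1%:Z));
((3%:Z, 0%:Z), (4%:Z, 2%:Z), (2%:Z, 3%:Z));
((3%:Z, 0%:Z), (4%:Z, 2%:Z), (4%:Z, 3%:Z));
((3%:Z, 0%:Z), (4%:Z, 3%:Z), (2%:Z, 1%:Z));
((3%:Z, 0%:Z), (4%:Z, 3%:Z), (4%:Z, 5%:Z));
((3%:Z, 1%:Z), (3%:Z, 3%:Z), (1%:Z, 4%:Z));
((3%:Z, 1%:Z), (3%:Z, 3%:Z), (5%:Z, 2%:Z));
((3%:Z, 1%:Z), (3%:Z, 4%:Z), (1%:Z, 5%:Z));
((3%:Z, 1%:Z), (3%:Z, 4%:Z), (5%:Z, 1%:Z));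
((3%:Z, 1%:Z), (4%:Z, 2%:Z), (1%:Z, 3%:Z));
((3%:Z, 1%:Z), (4%:Z, 2%:Z), (5%:Z, 3%:Z));
((3%:Z, 1%:Z), (4%:Z, 4%:Z), (1%:Z, 0%:Z));
((3%:Z, 1%:Z), (4%:Z, 4%:Z), (5%:Z, 0%:Z));
((3%:Z, 1%:Z), (5%:Z, 2%:Z), (1%:Z, 2%:Z));
((3%:Z, 1%:Z), (5%:Z, 2%:Z), (5%:Z, 4%:Z));
((3%:Z, 1%:Z), (5%:Z, 3%:Z), (1%:Z, 1%:Z));
((3%:Z, 1%:Z), (5%:Z, 3%:Z), (5%:Z, 5%:Z));
((3%:Z, 2%:Z), (0%:Z, 2%:Z), (1%:Z, 3%:Z));
((3%:Z, 2%:Z), (0%:Z, 2%:Z), (5%:Z, 3%:Z));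
((3%:Z, 2%:Z), (0%:Z, 3%:Z), (1%:Z, 2%:Z));
((3%:Z, 2%:Z), (0%:Z, 3%:Z), (5%:Z, 4%:Z));
((3%:Z, 2%:Z), (4%:Z, 3%:Z), (1%:Z, 5%:Z));
((3%:Z, 2%:Z), (4%:Z, 3%:Z), (5%:Z, 1%:Z));
((3%:Z, 2%:Z), (4%:Z, 4%:Z), (1%:Z, 0%:Z));
((3%:Z, 2%:Z), (4%:Z, 4%:Z), (5%:Z, 0%:Z));
((3%:Z, 2%:Z), (5%:Z, 2%:Z), (1%:Z, 4%:Z));
((3%:Z, 2%:Z), (5%:Z, 2%:Z), (5%:Z, 2%:Z));
((3%:Z, 2%:Z), (5%:Z, 4%:Z), (1%:Z, 1%:Z));
((3%:Z, 2%:Z), (5%:Z, 4%:Z), (5%:Z, 5%:Z));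
((3%:Z, 3%:Z), (0%:Z, 2%:Z), (2%:Z, 3%:Z));
((3%:Z, 3%:Z), (0%:Z, 2%:Z), (4%:Z, 3%:Z));
((3%:Z, 3%:Z), (0%:Z, 4%:Z), (2%:Z, 3%:Z));
((3%:Z, 3%:Z), (0%:Z, 4%:Z), (4%:Z, 3%:Z));
((3%:Z, 3%:Z), (1%:Z, 2%:Z), (2%:Z, 1%:Z));
((3%:Z, 3%:Z), (1%:Z, 2%:Z), (4%:Z, 5%:Z));
((3%:Z, 3%:Z), (1%:Z, 3%:Z), (2%:Z, 5%:Z));
((3%:Z, 3%:Z), (1%:Z, 3%:Z), (4%:Z, 1%:Z));
((3%:Z, 3%:Z), (5%:Z, 3%:Z), (2%:Z, 5%:Z));
((3%:Z, 3%:Z), (5%:Z, 3%:Z), (4%:Z, 1%:Z));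
((3%:Z, 3%:Z), (5%:Z, 4%:Z), (2%:Z, 1%:Z));
((3%:Z, 3%:Z), (5%:Z, 4%:Z), (4%:Z, 5%:Z));
((3%:Z, 4%:Z), (0%:Z, 3%:Z), (1%:Z, 2%:Z));
((3%:Z, 4%:Z), (0%:Z, 3%:Z), (5%:Z, 4%:Z));
((3%:Z, 4%:Z), (0%:Z, 4%:Z), (1%:Z, 3%:Z));
((3%:Z, 4%:Z), (0%:Z, 4%:Z), (5%:Z, 3%:Z));
((3%:Z, 4%:Z), (1%:Z, 2%:Z), (1%:Z, 1%:Z));
((3%:Z, 4%:Z), (1%:Z, 2%:Z), (5%:Z, 5%:Z));
((3%:Z, 4%:Z), (1%:Z, 4%:Z), (1%:Z, 4%:Z));
((3%:Z, 4%:Z), (1%:Z, 4%:Z), (5%:Z, 2%:Z));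
((3%:Z, 4%:Z), (2%:Z, 2%:Z), (1%:Z, 0%:Z));
((3%:Z, 4%:Z), (2%:Z, 2%:Z), (5%:Z, 0%:Z));
((3%:Z, 4%:Z), (2%:Z, 3%:Z), (1%:Z, 5%:Z));
((3%:Z, 4%:Z), (2%:Z, 3%:Z), (5%:Z, 1%:Z));
((3%:Z, 5%:Z), (1%:Z, 3%:Z), (1%:Z, 1%:Z));
((3%:Z, 5%:Z), (1%:Z, 3%:Z), (5%:Z, 5%:Z));
((3%:Z, 5%:Z), (1%:Z, 4%:Z), (1%:Z, 2%:Z));
((3%:Z, 5%:Z), (1%:Z, 4%:Z), (5%:Z, 4%:Z));
((3%:Z, 5%:Z), (2%:Z, 2%:Z), (1%:Z, 0%:Z));
((3%:Z, 5%:Z), (2%:Z, 2%:Z), (5%:Z, 0%:Z));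
((3%:Z, 5%:Z), (2%:Z, 4%:Z), (1%:Z, 3%:Z));
((3%:Z, 5%:Z), (2%:Z, 4%:Z), (5%:Z, 3%:Z));
((3%:Z, 5%:Z), (3%:Z, 2%:Z), (1%:Z, 5%:Z));
((3%:Z, 5%:Z), (3%:Z, 2%:Z), (5%:Z, 1%:Z));
((3%:Z, 5%:Z), (3%:Z, 3%:Z), (1%:Z, 4%:Z));
((3%:Z, 5%:Z), (3%:Z, 3%:Z), (5%:Z, 2%:Z));
((4%:Z, 0%:Z), (3%:Z, 2%:Z), (3%:Z, 1%:Z));
((4%:Z, 0%:Z), (3%:Z, 2%:Z), (3%:Z, 5%:Z));
((4%:Z, 0%:Z), (3%:Z, 3%:Z), (3%:Z, 2%:Z));
((4%:Z, 0%:Z), (3%:Z, 3%:Z), (3%:Z, 4%:Z));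
((4%:Z, 0%:Z), (4%:Z, 1%:Z), (3%:Z, 2%:Z));
((4%:Z, 0%:Z), (4%:Z, 1%:Z), (3%:Z, 4%:Z));
((4%:Z, 0%:Z), (4%:Z, 3%:Z), (3%:Z, 1%:Z));
((4%:Z, 0%:Z), (4%:Z, 3%:Z), (3%:Z, 5%:Z));
((4%:Z, 0%:Z), (5%:Z, 1%:Z), (3%:Z, 1%:Z));
((4%:Z, 0%:Z), (5%:Z, 1%:Z), (3%:Z, 5%:Z));
((4%:Z, 0%:Z), (5%:Z, 2%:Z), (3%:Z, 2%:Z));
((4%:Z, 0%:Z), (5%:Z, 2%:Z), (3%:Z, 4%:Z));
((4%:Z, 1%:Z), (0%:Z, 1%:Z), (2%:Z, 5%:Z));
((4%:Z, 1%:Z), (0%:Z, 1%:Z), (4%:Z, 1%:Z));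
((4%:Z, 1%:Z), (0%:Z, 2%:Z), (2%:Z, 3%:Z));
((4%:Z, 1%:Z), (0%:Z, 2%:Z), (4%:Z, 3%:Z));
((4%:Z, 1%:Z), (4%:Z, 2%:Z), (2%:Z, 3%:Z));
((4%:Z, 1%:Z), (4%:Z, 2%:Z), (4%:Z, 3%:Z));
((4%:Z, 1%:Z), (4%:Z, 3%:Z), (2%:Z, 5%:Z));
((4%:Z, 1%:Z), (4%:Z, 3%:Z), (4%:Z, 1%:Z));
((4%:Z, 1%:Z), (5%:Z, 1%:Z), (2%:Z, 1%:Z));
((4%:Z, 1%:Z), (5%:Z, 1%:Z), (4%:Z, 5%:Z));
((4%:Z, 1%:Z), (5%:Z, 3%:Z), (2%:Z, 1%:Z));
((4%:Z, 1%:Z), (5%:Z, 3%:Z), (4%:Z, 5%:Z));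
((4%:Z, 2%:Z), (0%:Z, 1%:Z), (3%:Z, 1%:Z));
((4%:Z, 2%:Z), (0%:Z, 1%:Z), (3%:Z, 5%:Z));
((4%:Z, 2%:Z), (0%:Z, 3%:Z), (3%:Z, 2%:Z));
((4%:Z, 2%:Z), (0%:Z, 3%:Z), (3%:Z, 4%:Z));
((4%:Z, 2%:Z), (1%:Z, 1%:Z), (3%:Z, 2%:Z));
((4%:Z, 2%:Z), (1%:Z, 1%:Z), (3%:Z, 4%:Z));
((4%:Z, 2%:Z), (1%:Z, 2%:Z), (3%:Z, 1%:Z));
((4%:Z, 2%:Z), (1%:Z, 2%:Z), (3%:Z, 5%:Z));
((4%:Z, 2%:Z), (5%:Z, 2%:Z), (3%:Z, 2%:Z));
((4%:Z, 2%:Z), (5%:Z, 2%:Z), (3%:Z, 4%:Z));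
((4%:Z, 2%:Z), (5%:Z, 3%:Z), (3%:Z, 1%:Z));
((4%:Z, 2%:Z), (5%:Z, 3%:Z), (3%:Z, 5%:Z));
((4%:Z, 3%:Z), (0%:Z, 2%:Z), (1%:Z, 3%:Z));
((4%:Z, 3%:Z), (0%:Z, 2%:Z), (5%:Z, 3%:Z));
((4%:Z, 3%:Z), (0%:Z, 3%:Z), (1%:Z, 4%:Z));
((4%:Z, 3%:Z), (0%:Z, 3%:Z), (5%:Z, 2%:Z));
((4%:Z, 3%:Z), (1%:Z, 1%:Z), (1%:Z, 2%:Z));
((4%:Z, 3%:Z), (1%:Z, 1%:Z), (5%:Z, 4%:Z));
((4%:Z, 3%:Z), (1%:Z, 3%:Z), (1%:Z, 5%:Z));
((4%:Z, 3%:Z), (1%:Z, 3%:Z), (5%:Z, 1%:Z));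
((4%:Z, 3%:Z), (2%:Z, 1%:Z), (1%:Z, 1%:Z));
((4%:Z, 3%:Z), (2%:Z, 1%:Z), (5%:Z, 5%:Z));
((4%:Z, 3%:Z), (2%:Z, 2%:Z), (1%:Z, 0%:Z));
((4%:Z, 3%:Z), (2%:Z, 2%:Z), (5%:Z, 0%:Z));
((4%:Z, 4%:Z), (1%:Z, 2%:Z), (0%:Z, 1%:Z));
((4%:Z, 4%:Z), (1%:Z, 2%:Z), (0%:Z, 5%:Z));
((4%:Z, 4%:Z), (1%:Z, 3%:Z), (0%:Z, 1%:Z));
((4%:Z, 4%:Z), (1%:Z, 3%:Z), (0%:Z, 5%:Z));
((4%:Z, 4%:Z), (2%:Z, 1%:Z), (0%:Z, 1%:Z));
((4%:Z, 4%:Z), (2%:Z, 1%:Z), (0%:Z, 5%:Z));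
((4%:Z, 4%:Z), (2%:Z, 3%:Z), (0%:Z, 1%:Z));
((4%:Z, 4%:Z), (2%:Z, 3%:Z), (0%:Z, 5%:Z));
((4%:Z, 4%:Z), (3%:Z, 1%:Z), (0%:Z, 1%:Z));
((4%:Z, 4%:Z), (3%:Z, 1%:Z), (0%:Z, 5%:Z));
((4%:Z, 4%:Z), (3%:Z, 2%:Z), (0%:Z, 1%:Z));
((4%:Z, 4%:Z), (3%:Z, 2%:Z), (0%:Z, 5%:Z));
((4%:Z, 5%:Z), (2%:Z, 2%:Z), (1%:Z, 0%:Z));
((4%:Z, 5%:Z), (2%:Z, 2%:Z), (5%:Z, 0%:Z));
((4%:Z, 5%:Z), (2%:Z, 3%:Z), (1%:Z, 1%:Z));
((4%:Z, 5%:Z), (2%:Z, 3%:Z), (5%:Z, 5%:Z));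
((4%:Z, 5%:Z), (3%:Z, 1%:Z), (1%:Z, 5%:Z));
((4%:Z, 5%:Z), (3%:Z, 1%:Z), (5%:Z, 1%:Z));
((4%:Z, 5%:Z), (3%:Z, 3%:Z), (1%:Z, 2%:Z));
((4%:Z, 5%:Z), (3%:Z, 3%:Z), (5%:Z, 4%:Z));
((4%:Z, 5%:Z), (4%:Z, 1%:Z), (1%:Z, 4%:Z));
((4%:Z, 5%:Z), (4%:Z, 1%:Z), (5%:Z, 2%:Z));
((4%:Z, 5%:Z), (4%:Z, 2%:Z), (1%:Z, 3%:Z));
((4%:Z, 5%:Z), (4%:Z, 2%:Z), (5%:Z, 3%:Z));
((5%:Z, 0%:Z), (0%:Z, 0%:Z), (1%:Z, 0%:Z));
((5%:Z, 0%:Z), (0%:Z, 0%:Z), (5%:Z, 0%:Z));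
((5%:Z, 0%:Z), (0%:Z, 1%:Z), (1%:Z, 5%:Z));
((5%:Z, 0%:Z), (0%:Z, 1%:Z), (5%:Z, 1%:Z));
((5%:Z, 0%:Z), (4%:Z, 1%:Z), (1%:Z, 2%:Z));
((5%:Z, 0%:Z), (4%:Z, 1%:Z), (5%:Z, 4%:Z));
((5%:Z, 0%:Z), (4%:Z, 2%:Z), (1%:Z, 3%:Z));
((5%:Z, 0%:Z), (4%:Z, 2%:Z), (5%:Z, 3%:Z));
((5%:Z, 0%:Z), (5%:Z, 0%:Z), (1%:Z, 1%:Z));
((5%:Z, 0%:Z), (5%:Z, 0%:Z), (5%:Z, 5%:Z));
((5%:Z, 0%:Z), (5%:Z, 2%:Z), (1%:Z, 4%:Z));
((5%:Z, 0%:Z), (5%:Z, 2%:Z), (5%:Z, 2%:Z));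
((5%:Z, 1%:Z), (0%:Z, 0%:Z), (1%:Z, 0%:Z));
((5%:Z, 1%:Z), (0%:Z, 0%:Z), (5%:Z, 0%:Z));
((5%:Z, 1%:Z), (0%:Z, 2%:Z), (1%:Z, 3%:Z));
((5%:Z, 1%:Z), (0%:Z, 2%:Z), (5%:Z, 3%:Z));
((5%:Z, 1%:Z), (1%:Z, 0%:Z), (1%:Z, 5%:Z));
((5%:Z, 1%:Z), (1%:Z, 0%:Z), (5%:Z, 1%:Z));
((5%:Z, 1%:Z), (1%:Z, 1%:Z), (1%:Z, 4%:Z));
((5%:Z, 1%:Z), (1%:Z, 1%:Z), (5%:Z, 2%:Z));
((5%:Z, 1%:Z), (5%:Z, 1%:Z), (1%:Z, 1%:Z));
((5%:Z, 1%:Z), (5%:Z, 1%:Z), (5%:Z, 5%:Z));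
((5%:Z, 1%:Z), (5%:Z, 2%:Z), (1%:Z, 2%:Z));
((5%:Z, 1%:Z), (5%:Z, 2%:Z), (5%:Z, 4%:Z));
((5%:Z, 2%:Z), (0%:Z, 1%:Z), (2%:Z, 1%:Z));
((5%:Z, 2%:Z), (0%:Z, 1%:Z), (4%:Z, 5%:Z));
((5%:Z, 2%:Z), (0%:Z, 2%:Z), (2%:Z, 3%:Z));
((5%:Z, 2%:Z), (0%:Z, 2%:Z), (4%:Z, 3%:Z));
((5%:Z, 2%:Z), (1%:Z, 0%:Z), (2%:Z, 5%:Z));
((5%:Z, 2%:Z), (1%:Z, 0%:Z), (4%:Z, 1%:Z));
((5%:Z, 2%:Z), (1%:Z, 2%:Z), (2%:Z, 5%:Z));
((5%:Z, 2%:Z), (1%:Z, 2%:Z), (4%:Z, 1%:Z));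
((5%:Z, 2%:Z), (2%:Z, 0%:Z), (2%:Z, 3%:Z));
((5%:Z, 2%:Z), (2%:Z, 0%:Z), (4%:Z, 3%:Z));
((5%:Z, 2%:Z), (2%:Z, 1%:Z), (2%:Z, 1%:Z));
((5%:Z, 2%:Z), (2%:Z, 1%:Z), (4%:Z, 5%:Z));
((5%:Z, 3%:Z), (1%:Z, 1%:Z), (1%:Z, 4%:Z));
((5%:Z, 3%:Z), (1%:Z, 1%:Z), (5%:Z, 2%:Z));
((5%:Z, 3%:Z), (1%:Z, 2%:Z), (1%:Z, 5%:Z));
((5%:Z, 3%:Z), (1%:Z, 2%:Z), (5%:Z, 1%:Z));
((5%:Z, 3%:Z), (2%:Z, 0%:Z), (1%:Z, 3%:Z));
((5%:Z, 3%:Z), (2%:Z, 0%:Z), (5%:Z, 3%:Z));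
((5%:Z, 3%:Z), (2%:Z, 2%:Z), (1%:Z, 0%:Z));
((5%:Z, 3%:Z), (2%:Z, 2%:Z), (5%:Z, 0%:Z));
((5%:Z, 3%:Z), (3%:Z, 0%:Z), (1%:Z, 2%:Z));
((5%:Z, 3%:Z), (3%:Z, 0%:Z), (5%:Z, 4%:Z));
((5%:Z, 3%:Z), (3%:Z, 1%:Z), (1%:Z, 1%:Z));
((5%:Z, 3%:Z), (3%:Z, 1%:Z), (5%:Z, 5%:Z));
((5%:Z, 4%:Z), (2%:Z, 1%:Z), (1%:Z, 5%:Z));
((5%:Z, 4%:Z), (2%:Z, 1%:Z), (5%:Z, 1%:Z));
((5%:Z, 4%:Z), (2%:Z, 2%:Z), (1%:Z, 0%:Z));
((5%:Z, 4%:Z), (2%:Z, 2%:Z), (5%:Z, 0%:Z));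
((5%:Z, 4%:Z), (3%:Z, 0%:Z), (1%:Z, 4%:Z));
((5%:Z, 4%:Z), (3%:Z, 0%:Z), (5%:Z, 2%:Z));
((5%:Z, 4%:Z), (3%:Z, 2%:Z), (1%:Z, 1%:Z));
((5%:Z, 4%:Z), (3%:Z, 2%:Z), (5%:Z, 5%:Z));
((5%:Z, 4%:Z), (4%:Z, 0%:Z), (1%:Z, 3%:Z));
((5%:Z, 4%:Z), (4%:Z, 0%:Z), (5%:Z, 3%:Z));
((5%:Z, 4%:Z), (4%:Z, 1%:Z), (1%:Z, 2%:Z));
((5%:Z, 4%:Z), (4%:Z, 1%:Z), (5%:Z, 4%:Z));
((5%:Z, 5%:Z), (3%:Z, 1%:Z), (2%:Z, 5%:Z));
((5%:Z, 5%:Z), (3%:Z, 1%:Z), (4%:Z, 1%:Z));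
((5%:Z, 5%:Z), (3%:Z, 2%:Z), (2%:Z, 1%:Z));
((5%:Z, 5%:Z), (3%:Z, 2%:Z), (4%:Z, 5%:Z));
((5%:Z, 5%:Z), (4%:Z, 0%:Z), (2%:Z, 3%:Z));
((5%:Z, 5%:Z), (4%:Z, 0%:Z), (4%:Z, 3%:Z));
((5%:Z, 5%:Z), (4%:Z, 2%:Z), (2%:Z, 3%:Z));
((5%:Z, 5%:Z), (4%:Z, 2%:Z), (4%:Z, 3%:Z));
((5%:Z, 5%:Z), (5%:Z, 0%:Z), (2%:Z, 1%:Z));
((5%:Z, 5%:Z), (5%:Z, 0%:Z), (4%:Z, 5%:Z));
((5%:Z, 5%:Z), (5%:Z, 1%:Z), (2%:Z, 5%:Z));
((5%:Z, 5%:Z), (5%:Z, 1%:Z), (4%:Z, 1%:Z))].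

Lemma H6_ok : memb (init _) H6 && all (fun X => all (fun c => memb (rdS (step c X)) H6) (iota 0 6)) H6.
Proof. vm_compute. reflexivity. Qed.

Definition fz (a : int) : 'Z_6 := a%:~R.
Definition m2 (x : int * int) : 'Z_6 * 'Z_6 := (fz x.1, fz x.2).
Definition mS (X : StZ) := (m2 X.1.1, m2 X.1.2, m2 X.2).

Lemma H6_fin : all (fun Y : StZ => (m2 Y.1.2 == (0,0)) ==> (fz Y.2.2 == 0)) H6.
Proof. vm_compute. reflexivity. Qed.

Lemma P6 : Pc 'Z_6 6 = ((1, 0), (0, 0), 0).
Proof. apply/eqP. vm_compute. reflexivity. Qed.

Section Morph.
Variables (R S : comPzRingType) (f : {rmorphism R -> S}).
Definition g2 (x : R * R) := (f x.1, f x.2).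
Definition g3 (z : (R * R) * (R * R) * R) := (g2 z.1.1, g2 z.1.2, f z.2).
Definition gS (X : (R * R) * (R * R) * (R * R)) := (g2 X.1.1, g2 X.1.2, g2 X.2).
Lemma g2_pa x y : g2 (pa x y) = pa (g2 x) (g2 y).
Proof. by rewrite /g2 /pa /= !rmorphD. Qed.
Lemma g2_pm x y : g2 (pm x y) = pm (g2 x) (g2 y).
Proof. by rewrite /g2 /pm /= !rmorphD ?rmorphN !rmorphM. Qed.
Lemma g2_01 : g2 (0, 1) = (0, 1).
Proof. by rewrite /g2 /= rmorph0 rmorph1. Qed.
Lemma g2_10 : g2 (1, 0) = (1, 0).
Proof. by rewrite /g2 /= rmorph0 rmorph1. Qed.
Lemma g2_00 : g2 (0, 0) = (0, 0).
Proof. by rewrite /g2 /= rmorph0. Qed.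
Lemma g2_N11 : g2 (-1, 1) = (-1, 1).
Proof. by rewrite /g2 /= rmorphN1 rmorph1. Qed.
Lemma g3_Pc c : g3 (Pc R c) = Pc S c.
Proof.
elim: c => [|c IH]; first by rewrite /g3 /Pc /= g2_10 g2_00 rmorph0.
rewrite /Pc !iterS -/(Pc R c) -/(Pc S c) -IH /g3 /Fst /=.
by rewrite g2_pm g2_01 g2_pa g2_10 g2_pm g2_01 rmorphD rmorph1.
Qed.
Lemma gS_step c X : gS (step c X) = step c (gS X).
Proof.
rewrite /gS /step /= -g3_Pc /g3 /=.
by rewrite g2_pa !g2_pm g2_N11 /g2 /= ?rmorphB ?rmorphD ?rmorphN rmorphM.
Qed.
Lemma gS_col cs : gS (col R cs) = col S cs.
Proof.
elim: cs => [|c cs IH] /=; first by rewrite /gS /init /= g2_10 g2_00.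
by rewrite gS_step IH.
Qed.
End Morph.

Lemma Pc_nat (R : comPzRingType) c : (Pc R c).2 = c%:R.
Proof. elim: c => [|c IH]; first by []. by rewrite /Pc iterS -/(Pc R c) /= IH -natr1. Qed.

Lemma Pc6 c : Pc 'Z_6 c = Pc 'Z_6 (c %% 6)%N.
Proof.
rewrite {1}(divn_eq c 6) addnC /Pc iterD; congr (iter _ _ _).
elim: (c %/ 6)%N => [|k IH] //.
by rewrite mulSn iterD IH -/(Pc _ 6) P6.
Qed.

Lemma step6 c X : step c X = step (c %% 6)%N X :> (('Z_6 * 'Z_6) * ('Z_6 * 'Z_6) * ('Z_6 * 'Z_6))%type.
Proof. by rewrite /step Pc6. Qed.

Lemma intEqP a b : intEq a b -> a = b.
Proof. by case: a b => [m|m] [n|n] //= /eqnP ->. Qed.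
Lemma eqSP X Y : eqS X Y -> X = Y.
Proof.
case: X => [[[a1 a2] [b1 b2]] [c1 c2]]; case: Y => [[[d1 d2] [e1 e2]] [f1 f2]].
by rewrite /eqS /eqP2 /= => /and3P [/andP [/intEqP -> /intEqP ->] /andP [/intEqP -> /intEqP ->] /andP [/intEqP -> /intEqP ->]].
Qed.
Lemma membP X H : memb X H -> exists2 Y, Y \in H & X = Y.
Proof. by move/hasP => [Y YH /eqSP ->]; exists Y. Qed.

Lemma fz6 : fz 6 = 0.
Proof. by apply/eqP; vm_compute. Qed.
Lemma fz_rd a : fz (rd a) = fz a.
Proof.
rewrite /fz /rd; have e := divz_eq a 6.
by rewrite [X in _ = X%:~R]e [RHS]intrD [in RHS]intrM (fz6 : (6%:~R : 'Z_6) = 0) mulr0 add0r.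
Qed.
Lemma mS_rdS X : mS (rdS X) = mS X.
Proof. by rewrite /mS /rdS /m2 /rdp /= !fz_rd. Qed.

Lemma mS_gS X : mS X = gS (intr : int -> 'Z_6) X.
Proof. by []. Qed.

Lemma inv cs : exists2 Y, Y \in H6 & mS Y = col 'Z_6 cs.
Proof.
have /andP [Hi /allP Hc] := H6_ok.
elim: cs => [|c cs [Y YH eY]].
  have [Y YH eY] := membP Hi; exists Y => //.
  by rewrite -eY mS_gS; exact: (gS_col _ [::]).
have hc : (c %% 6)%N \in iota 0 6 by rewrite mem_iota ltn_pmod.
have /membP [Y' Y'H eY'] := allP (Hc Y YH) _ hc.
exists Y' => //; rewrite -eY' mS_rdS /= step6 -eY.
by rewrite !mS_gS gS_step.
Qed.

Definition q : algC := - omega.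
Lemma q2 : q ^+ 2 = q - 1.
Proof.
rewrite /q /omega; set t := sqrtC (-3).
have ht : t ^+ 2 = -3 := sqrtCK _.
have h2 : (2%:R : algC) != 0 by rewrite pnatr_eq0.
apply/eqP; rewrite -subr_eq0.
have -> : (-((-1 + t) / 2%:R)) ^+ 2 - (-((-1 + t) / 2%:R) - 1) = (t ^+ 2 + 3%:R) / 4%:R.
  by field.
by rewrite ht addNr mul0r.
Qed.

Lemma qinv : - q^-1 = q - 1.
Proof.
have h : q * (1 - q) = 1.
  rewrite mulrBr mulr1 -expr2 q2. ring.
have qn0 : q != 0.
  by apply/eqP => q0; move: h; rewrite q0 mul0r => /eqP; rewrite eq_sym oner_eq0.
have -> : q^-1 = 1 - q by apply: (mulfI qn0); rewrite mulfV // h.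
by rewrite opprB.
Qed.

Definition toC (z : int * int) : algC := z.1%:~R + z.2%:~R * q.
Lemma toC_pm x y : toC (pm x y) = toC x * toC y.
Proof.
rewrite /toC /pm /=.
have -> : (x.1%:~R + x.2%:~R * q) * (y.1%:~R + y.2%:~R * q) =
  (x.1%:~R * y.1%:~R + (x.1%:~R * y.2%:~R + x.2%:~R * y.1%:~R) * q + x.2%:~R * y.2%:~R * q ^+ 2 :> algC)
  by ring.
rewrite q2 !intrD !intrM intrN; ring.
Qed.
Lemma toC_pa x y : toC (pa x y) = toC x + toC y.
Proof. rewrite /toC /pa /= !intrD; ring. Qed.
Lemma toC10 : toC (1, 0) = 1. Proof. by rewrite /toC /= mul0r addr0. Qed.
Lemma toC00 : toC (0, 0) = 0. Proof. by rewrite /toC /= mul0r addr0. Qed.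
Lemma toC01 : toC (0, 1) = q. Proof. by rewrite /toC /= mul1r add0r. Qed.
Lemma toCN11 : toC (-1, 1) = q - 1. Proof. by rewrite /toC /= mul1r addrC. Qed.

Lemma RqX c : Rq q ^+ c = \matrix_(i < 2, j < 2)
  (if (i == 0 :> nat) then (if (j == 0 :> nat) then toC (Pc int c).1.1 else toC (Pc int c).1.2)
   else (if (j == 0 :> nat) then 0 else 1)).
Proof.
elim: c => [|c IH].
  apply/matrixP => i j; rewrite expr0 !mxE.
  by case: i => [[|[|//]]] Hi; case: j => [[|[|//]]] Hj /=; rewrite ?toC10 ?toC00.
rewrite exprS -mulmxE IH; apply/matrixP => i j.
rewrite !mxE !big_ord_recl big_ord0 !mxE /=.
rewrite toC_pa !toC_pm toC10 toC01.
by case: i => [[|[|//]]] Hi; case: j => [[|[|//]]] Hj /=; rewrite /bump /=; ring.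
Qed.

Lemma RqS c : Rq q ^+ c *m Sq q = \matrix_(i < 2, j < 2)
  (if (i == 0 :> nat) then (if (j == 0 :> nat) then toC (Pc int c).1.2 else toC (Pc int c).1.1 * (q - 1))
   else (if (j == 0 :> nat) then 1 else 0)).
Proof.
rewrite RqX; apply/matrixP => i j.
rewrite !mxE !big_ord_recl big_ord0 !mxE /=.
by case: i => [[|[|//]]] Hi; case: j => [[|[|//]]] Hj /=; rewrite /bump /= ?qinv; ring.
Qed.

Lemma Mcol cs (i : 'I_2) : Mq q cs i ord0 =
  if (i == 0 :> nat) then toC (col int cs).1.1 else toC (col int cs).1.2.
Proof.
elim: cs i => [|c cs IH] i.
  by rewrite /Mq /= mxE; case: i => [[|[|//]]] Hi /=; rewrite ?toC10 ?toC00.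
rewrite /Mq /= -/(Mq q cs) !mxE !big_ord_recl big_ord0 RqS !mxE /=.
rewrite (IH ord0) (IH (lift ord0 ord0)) /= /step /=.
rewrite toC_pa !toC_pm toCN11.
by case: i => [[|[|//]]] Hi /=; ring.
Qed.

Lemma Sval_col cs : Sval q cs = toC (col int cs).1.2.
Proof.
rewrite /Sval.
have -> : (inord 0 : 'I_2) = ord0 by apply/val_inj; rewrite /= inordK.
by rewrite Mcol inordK.
Qed.

Lemma toC0 z : toC z = 0 -> z = (0, 0).
Proof.
case: z => a b; rewrite /toC /= => H.
have hq : (b%:~R * q : algC) = - a%:~R.
  by apply/eqP; rewrite -addr_eq0 addrC H.
have : ((a * a + a * b + b * b)%:~R : algC) = 0.
  rewrite !intrD !intrM.
  have -> : (a%:~R : algC) = - (b%:~R * q) by rewrite hq opprK.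
  have -> : - (b%:~R * q) * - (b%:~R * q) + - (b%:~R * q) * b%:~R + b%:~R * b%:~R
     = (b%:~R * b%:~R) * (q ^+ 2 - q + 1) :> algC by ring.
  rewrite q2; ring.
move/eqP; rewrite intr_eq0 => /eqP h.
have hb : b = 0 by nia.
have ha : a = 0 by nia.
by rewrite ha hb.
Qed.

Lemma colZ cs : cs != [::] -> all (fun c => 2 <= c)%N cs ->
  [/\ 0 < (col int cs).2.2, (col int cs).2.2 < (col int cs).2.1,
   exists ab : int * int, ab.1 * (col int cs).2.1 + ab.2 * (col int cs).2.2 = 1 &
   ncf cs = (col int cs).2.1%:~R / (col int cs).2.2%:~R].
Proof.
elim: cs => [//|c cs IH] _ /andP [hc hall].
have hcZ : (2 <= (c%:R : int)) by rewrite natz; lia.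
case E: cs => [|d cs'].
  rewrite /= Pc_nat mulr1 subr0; split => //.
  - by exists (0, 1); rewrite /= mul0r add0r mulr1.
  - by rewrite natz (_ : (1%:~R : rat) = 1) // divr1.
rewrite -E in IH *.
have ne : cs != [::] by rewrite E.
have [hv huv [[a b] /= hab] hn] := IH ne hall.
set u := (col int cs).2.1 in huv hab hn *; set v := (col int cs).2.2 in huv hab hn *.
rewrite /= Pc_nat -/u -/v.
have hu : 0 < u by lia.
split.
- by [].
- nia.
- by exists (- b, a + b * c%:R) => /=; rewrite -hab; ring.
- have -> : (match cs with [::] => c%:R | _ :: _ => c%:R - (ncf cs)^-1 end) = c%:R - (ncf cs)^-1 by rewrite E.
  rewrite hn intrB intrM.
  have -> : ((c%:R : int)%:~R : rat) = c%:R by rewrite natz.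
  have hu' : (u%:~R : rat) != 0 by rewrite intr_eq0; apply/eqP; lia.
  have hv' : (v%:~R : rat) != 0 by rewrite intr_eq0; apply/eqP; lia.
  by field; apply/andP; split; [exact: hu' | exact: hv'].
Qed.

Lemma fin_eq (S v k l : int) : 0 < S -> 0 < v -> S = v * k -> v = S * l -> v = S.
Proof.
move=> hS hv e1 e2.
have hk : 0 < k.
  have h : 0 < v * k by rewrite -e1.
  by rewrite pmulr_rgt0 in h.
have hl : 0 < l.
  have h : 0 < S * l by rewrite -e2.
  by rewrite pmulr_rgt0 in h.
have h1 : v <= S by rewrite e1; nia.
have h2 : S <= v by rewrite e2; nia.
lia.
Qed.

Unset Implicit Arguments.
Set Strict Implicit.

Theorem proposition5p3 (r : int) (s : nat) (m : int) (cs : seq nat) :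
  (0 < s)%N -> coprime `|r|%N s ->
  cs != [::] -> all (fun c => 2 <= c)%N cs ->
  ncf cs = r%:~R / s%:R + m%:~R ->
  Sval (- omega) cs = 0 ->
  (6 %| s)%N.
Proof.
move=> s0 cop ne hall hncf hSv.
have [hv huv [[a b] /= hab] hn] := colZ ne hall.
set X := col int cs in hv huv hab hn *.
have hvs : X.2.2 = s%:Z.
  set u := X.2.1 in huv hab hn *; set v := X.2.2 in hv huv hab hn *.
  have hs2 : (s%:R : rat) = (s%:Z)%:~R by [].
  set S := s%:Z in hs2 *.
  have hS : 0 < S by rewrite /S; lia.
  have hq : u%:~R / v%:~R = r%:~R / S%:~R + m%:~R :> rat by rewrite -hn hncf hs2.
  have hv' : (v%:~R : rat) != 0 by rewrite intr_eq0; apply/eqP; lia.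
  have hs' : (S%:~R : rat) != 0 by rewrite intr_eq0; apply/eqP; lia.
  have e2 : (u * S)%:~R = ((r + m * S) * v)%:~R :> rat.
    apply/eqP; rewrite -subr_eq0 !intrM intrD intrM.
    have -> : u%:~R * S%:~R - (r%:~R + m%:~R * S%:~R) * v%:~R
       = (u%:~R / v%:~R - (r%:~R / S%:~R + m%:~R)) * v%:~R * S%:~R :> rat.
      by field; apply/andP; split; [exact: hs' | exact: hv'].
    by rewrite hq subrr !mul0r.
  have e3 : u * S = (r + m * S) * v by apply: (@intr_inj rat).
  have cz : coprimez r S by [].
  have [[al be] /= hab2] := coprimezP _ _ cz.
  have K : S = v * (a * (r + m * S) + b * S).
    transitivity (S * (a * u + b * v)); first by rewrite hab mulr1.
    transitivity (a * (u * S) + b * v * S); first by ring.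
    rewrite e3; ring.
  have L : v = S * (al * u + (be - al * m) * v).
    transitivity (v * (al * r + be * S)); first by rewrite hab2 mulr1.
    transitivity (al * ((r + m * S) * v) + (be - al * m) * S * v); first by ring.
    rewrite -e3; ring.
  exact: (fin_eq hS hv K L).
have hy : X.1.2 = (0, 0) by apply: toC0; rewrite -Sval_col; exact: hSv.
have [Y YH eY] := inv cs.
have eY' : mS Y = mS X by rewrite eY mS_gS gS_col.
have e12 : m2 Y.1.2 = m2 X.1.2 by exact: (congr1 (fun Z => Z.1.2) eY').
have e22 : fz Y.2.2 = fz X.2.2 by exact: (congr1 (fun Z => Z.2.2) eY').
have := allP H6_fin Y YH; rewrite /= e12 e22 hy hvs.
have -> : m2 (0, 0) = (0, 0) by [].
rewrite eqxx /= => /eqP h.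
have := val_Zp_nat (p := 6) isT s.
rewrite /fz in h; rewrite (_ : (s%:R : 'Z_6) = 0) //.
by move=> e; rewrite /dvdn -e.
Qed.
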